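(* Let $A_0(z)$ be the unique function holomorphic near $z=0$ with $A_0(0)=0$ and $z(1+A_0(z))^3=A_0(z)$, and define $A_{k}(z)$, $k\ge1$, recursively by the recurrence below. Define numbers $A_k[n]$ by $A_k(z)=(-1)^k\sum_{n=1}^\infty A_k[n]z^n$. Then for all $k\ge0$ and $n\ge1$, $A_k[n]$ is a positive integer, and $A_k[1]=1$.
   Context: With $\delta_z=z\frac{d}{dz}$, for $k\ge0$: $$A_{k+1}=\frac{1+A_0}{2A_0-1}\Bigl(\delta_z^2A_k+\sum_{i+j=k}\bigl(A_i\delta_z^2A_j-\delta_zA_i\,\delta_zA_j\bigr)-3z\!\!\sum_{\substack{i+j=k+1\\ i,j\le k}}\!\!A_iA_j-z\!\!\!\sum_{\substack{j_1+j_2+j_3=k+1\\ j_1,j_2,j_3\le k}}\!\!\!A_{j_1}A_{j_2}A_{j_3}\Bigr),$$ all indices nonnegative. Equivalently, $(A_k)_{k\ge0}$ is the unique sequence of functions holomorphic in $|z|<4/27$ such that $\sum_k A_k(z)a^{-2k}$ formally solves $a^2(z(1+A)^3-A)=(1+A)\delta_z^2A-(\delta_zA)^2$. *)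

(* Defs.v *)
From HB Require Import structures.
From mathcomp Require Import all_boot all_order all_algebra all_field.
Set Implicit Arguments. Unset Strict Implicit. Unset Printing Implicit Defensive.
Import Order.TTheory GRing.Theory Num.Theory.
Local Open Scope ring_scope.

(* a power series sum_n f n z^n *)
Definition series := nat -> algC.

Definition sconst (c : algC) : series := fun n => if n is 0 then c else 0.
Definition sadd (f g : series) : series := fun n => f n + g n.
Definition smul (f g : series) : series :=
  fun n => \sum_(i < n.+1) f i * g (n - i)%N.
Definition sz (f : series) : series := fun n => if n is m.+1 then f m else 0.
(* delta_z = z d/dz *)
Definition sdelta (f : series) : series := fun n => n%:R * f n.

(* The bracket in the recurrence for A_{k+1}, as a series. *)
Definition rec_rhs (A : nat -> series) (k : nat) : series := fun n =>
  sdelta (sdelta (A k)) n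
  + \sum_(i < k.+1) (smul (A i) (sdelta (sdelta (A (k - i)%N))) n
                     - smul (sdelta (A i)) (sdelta (A (k - i)%N)) n)
  - 3 * \sum_(i < k.+1) \sum_(j < k.+1 | (i + j == k.+1)%N)
           sz (smul (A i) (A j)) n
  - \sum_(j1 < k.+1) \sum_(j2 < k.+1) \sum_(j3 < k.+1 | (j1 + j2 + j3 == k.+1)%N)
           sz (smul (smul (A j1) (A j2)) (A j3)) n.

(* Main.v *)
Require Import Defs.
From HB Require Import structures.
From mathcomp Require Import all_boot all_order all_algebra all_field.
From mathcomp Require Import boolp.
From mathcomp Require Import ring lra.
Import Order.TTheory GRing.Theory Num.Theory.
Local Open Scope ring_scope.
Set Implicit Arguments. Unset Strict Implicit. Unset Printing Implicit Defensive.

Definition P (N : nat) (f : series) : {poly algC} := \poly_(i < N.+1) f i.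

Lemma coefP N f i : (P N f)`_i = if (i < N.+1)%N then f i else 0.
Proof. by rewrite /P coef_poly. Qed.

Lemma smulP f g N i : (i <= N)%N -> smul f g i = (P N f * P N g)`_i.
Proof.
move=> iN; rewrite coefM /smul; apply: eq_bigr => j _.
rewrite !coefP.
have jN : (j < N.+1)%N by apply: leq_trans (ltn_ord j) _.
have jN' : (i - j < N.+1)%N by rewrite ltnS (leq_trans (leq_subr _ _)).
by rewrite jN jN'.
Qed.

Lemma smulA f g h : smul f (smul g h) = smul (smul f g) h.
Proof.
apply: funext => n.
transitivity ((P n f * (P n g * P n h))`_n).
  rewrite coefM {1}/smul; apply: eq_bigr => j _.
  rewrite coefP ltn_ord; congr (_ * _).
  by rewrite (@smulP _ _ n) // leq_subr.
transitivity (((P n f * P n g) * P n h))`_n; first by rewrite mulrA.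
rewrite coefM {2}/smul; apply: eq_bigr => j _.
rewrite [(P n h)`__]coefP ltnS leq_subr; congr (_ * _).
by rewrite -/(smul f g j) (@smulP _ _ n) // -ltnS.
Qed.

Lemma smulC f g : smul f g = smul g f.
Proof.
apply: funext => n; rewrite !(@smulP _ _ n) //; by rewrite mulrC.
Qed.

Lemma smulDl f g h : smul (sadd f g) h = sadd (smul f h) (smul g h).
Proof. by apply: funext => n; rewrite /smul /sadd -big_split; apply: eq_bigr => i _; rewrite mulrDl. Qed.

Lemma smul1 f : smul (sconst 1) f = f.
Proof.
apply: funext => n; rewrite /smul big_ord_recl /= mul1r subn0 big1 ?addr0 // => i _.
by rewrite mul0r.
Qed.

Lemma sconst1_neq0 : sconst 1 <> sconst 0.
Proof. move/(congr1 (fun f => f 0%N)) => /= /eqP; by rewrite oner_eq0. Qed.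

Record ps := PS { co : series }.
HB.instance Definition _ := gen_eqMixin ps.
HB.instance Definition _ := gen_choiceMixin ps.

Definition ps0 := PS (sconst 0).
Definition psadd (a b : ps) := PS (sadd (co a) (co b)).
Definition psopp (a : ps) := PS (fun n => - co a n).
Definition ps1 := PS (sconst 1).
Definition psmul (a b : ps) := PS (smul (co a) (co b)).

Lemma psaddA : associative psadd.
Proof. by case=> f [g] [h]; rewrite /psadd /=; congr PS; apply: funext => n; rewrite /sadd addrA. Qed.
Lemma psaddC : commutative psadd.
Proof. by case=> f [g]; rewrite /psadd /=; congr PS; apply: funext => n; rewrite /sadd addrC. Qed.
Lemma psadd0 : left_id ps0 psadd.
Proof. by case=> f; rewrite /psadd /=; congr PS; apply: funext => -[|n]; rewrite /sadd /= add0r. Qed.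
Lemma psaddN : left_inverse ps0 psopp psadd.
Proof. by case=> f; rewrite /psadd /=; congr PS; apply: funext => -[|n]; rewrite /sadd /= addNr. Qed.

HB.instance Definition _ := GRing.isZmodule.Build ps psaddA psaddC psadd0 psaddN.

Lemma psmulA : associative psmul.
Proof. by case=> f [g] [h]; rewrite /psmul /= smulA. Qed.
Lemma psmulC : commutative psmul.
Proof. by case=> f [g]; rewrite /psmul /= smulC. Qed.
Lemma psmul1 : left_id ps1 psmul.
Proof. by case=> f; rewrite /psmul /= smul1. Qed.
Lemma psmulDl : left_distributive psmul psadd.
Proof. by case=> f [g] [h]; rewrite /psmul /psadd /= smulDl. Qed.
Lemma ps1_neq0 : ps1 != 0.
Proof. apply/eqP => -[] /sconst1_neq0 //. Qed.

HB.instance Definition _ := GRing.Zmodule_isComNzRing.Build ps psmulA psmulC psmul1 psmulDl ps1_neq0.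


Lemma x1 (x : algC) : x \is a Num.nat -> x + 1 \is a Num.nat.
Proof. by move=> h; rewrite rpredD ?rpred1. Qed.

Lemma co_add a b n : co (a + b) n = co a n + co b n. Proof. by []. Qed.
Lemma co_opp a n : co (- a) n = - co a n. Proof. by []. Qed.
Lemma co_mul a b : co (a * b) = smul (co a) (co b). Proof. by []. Qed.
Lemma PS_add f g : PS (sadd f g) = PS f + PS g. Proof. by []. Qed.
Lemma PS_mul f g : PS (smul f g) = PS f * PS g. Proof. by []. Qed.
Lemma PS_1 : PS (sconst 1) = 1. Proof. by []. Qed.
Lemma PS_m1 : PS (sconst (-1)) = -1.
Proof. rewrite /GRing.opp /= /psopp /=. congr PS; apply: funext => -[|n] //=; by rewrite oppr0. Qed.

Definition Zs : series := fun n => if n == 1%N then 1 else 0.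
Lemma PS_sz f : PS (sz f) = PS Zs * PS f.
Proof.
rewrite -PS_mul; congr PS; apply: funext => -[|n].
  by rewrite /smul big_ord_recl big_ord0 /Zs /= mul0r addr0.
rewrite /smul big_ord_recl big_ord_recl /= /Zs /= mul0r mul1r add0r subn1 /=.
rewrite big1 ?addr0 // => i _; by rewrite mul0r.
Qed.

Lemma cancel1 (a d : series) : a 0%N = 0 -> smul (sadd (sconst 1) a) d = sconst 0 ->
  forall n, d n = 0.
Proof.
move=> a0 H; elim/ltn_ind => n IH.
have := congr1 (fun f => f n) H; rewrite /smul big_ord_recl /sadd /= a0 addr0 mul1r subn0.
rewrite big1 ?addr0.
  by case: n {IH} => [|n] /=.
move=> i _; rewrite IH ?mulr0 //.
by case: n IH i => [|n] IH [i hi] //=; rewrite /bump /= subSS ltnS leq_subr.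
Qed.

Lemma key (A0 X R : series) :
  A0 0%N = 0 ->
  sz (smul (sadd (sconst 1) A0) (smul (sadd (sconst 1) A0) (sadd (sconst 1) A0))) = A0 ->
  smul (sadd (fun n => 2 * A0 n) (sconst (-1))) X = smul (sadd (sconst 1) A0) R ->
  forall n, let cs := sz (smul (sadd (sconst 1) A0) (sadd (sconst 1) A0)) in
  smul cs X n + smul cs X n + smul cs X n - X n - R n = 0.
Proof.
move=> a0 H0 H n cs.
set a := PS A0; set x := PS X; set r := PS R; set z := PS Zs; set c := PS cs.
have Hc : z * ((1+a) * ((1+a)*(1+a))) = a.
  by rewrite /z /a ?PS_1 -!PS_add -!PS_mul PS_mul -PS_sz H0.
have Hh : (a + a + -1) * x = (1+a) * r.
  have -> : a + a = PS (fun n => 2 * A0 n).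
    by congr PS; apply: funext => m; rewrite /sadd mulr_natl mulr2n.
  by rewrite /x /r /a -PS_m1 -!PS_add -!PS_mul H.
have hc' : c = z * ((1+a)*(1+a)) by rewrite /c /cs PS_sz PS_mul PS_add.
have E : (1+a) * (c*x + c*x + c*x - x - r) = 0.
  have -> : (1+a) * (c*x + c*x + c*x - x - r) = 3 * (z * ((1+a)*((1+a)*(1+a)))) * x - (1+a)*x - (a+a+-1)*x + ((a + a + -1) * x - (1+a)*r).
    by rewrite hc'; ring.
  rewrite Hc -Hh subrr addr0. clearbody a x r z c. ring.
have := congr1 co E.
rewrite co_mul /= => E'.
exact: (cancel1 a0 E' n).
Qed.

Definition isnat (x : algC) := x \is a Num.nat.

Lemma smul0 f g : smul f g 0%N = f 0%N * g 0%N.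
Proof. by rewrite /smul big_ord_recl big_ord0 addr0. Qed.

Lemma smul1' f g : smul f g 1%N = f 0%N * g 1%N + f 1%N * g 0%N.
Proof. by rewrite /smul big_ord_recl big_ord_recl big_ord0 addr0. Qed.

Lemma smul_natU f g n : (forall p, (p <= n)%N -> isnat (f p)) ->
  (forall p, (p <= n)%N -> isnat (g p)) -> isnat (smul f g n).
Proof.
move=> hf hg; rewrite /isnat /smul; apply: rpred_sum => i _; apply: rpredM.
  by apply: hf; rewrite -ltnS.
by apply: hg; rewrite leq_subr.
Qed.

Lemma smul_nat f g n : (forall p, isnat (f p)) -> (forall p, isnat (g p)) -> isnat (smul f g n).
Proof. by move=> hf hg; apply: smul_natU. Qed.

Lemma sz_nat f n : (forall p, isnat (f p)) -> isnat (sz f n).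
Proof. by case: n => [|n] h //=; rewrite /isnat rpred0. Qed.

Lemma sdelta_nat f n : (forall p, isnat (f p)) -> isnat (sdelta f n).
Proof. by move=> h; rewrite /isnat /sdelta rpredM ?natr_nat //; apply: h. Qed.

Lemma smul_nat_lt f g n : f 0%N = 0 -> (forall p, isnat (f p)) ->
  (forall m, (m < n)%N -> isnat (g m)) -> isnat (smul f g n).
Proof.
move=> f0 hf hg; rewrite /isnat /smul big_ord_recl f0 mul0r add0r.
apply: rpred_sum => i _; apply: rpredM; first exact: hf.
case: n hg i => [|n] hg [i hi] //=; apply: hg.
by rewrite /bump /= subSS ltnS leq_subr.
Qed.

Lemma smul_ge f g n : f 0%N = 1 -> (forall p, (p <= n)%N -> 0 <= f p) -> (forall p, (p <= n)%N -> 0 <= g p) ->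
  g n <= smul f g n.
Proof.
move=> f1 hf hg; rewrite /smul big_ord_recl f1 mul1r subn0 lerDl.
apply: sumr_ge0 => i _; apply: mulr_ge0; [apply: (hf) | apply: (hg); exact: leq_subr].
by case: i => i hi /=.
Qed.

Lemma rev_sum k (G : nat -> nat -> algC) :
  \sum_(i < k.+1) G i (k - i)%N = \sum_(i < k.+1) G (k - i)%N i.
Proof.
rewrite (reindex_inj rev_ord_inj) /=.
apply: eq_bigr => i _; rewrite subSS subKn //; rewrite -ltnS; exact: (ltn_ord i).
Qed.

Definition T (B : nat -> series) k n := \sum_(i < k.+1)
  (smul (B i) (sdelta (sdelta (B (k - i)%N))) n - smul (sdelta (B i)) (sdelta (B (k - i)%N)) n).
Definition S2 (B : nat -> series) k n := \sum_(i < k.+1) \sum_(j < k.+1 | (i + j == k.+1)%N)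
           sz (smul (B i) (B j)) n.
Definition S3 (B : nat -> series) k n := \sum_(j1 < k.+1) \sum_(j2 < k.+1) \sum_(j3 < k.+1 | (j1 + j2 + j3 == k.+1)%N)
           sz (smul (smul (B j1) (B j2)) (B j3)) n.

Lemma T_nat B k n : (forall i, (i <= k)%N -> forall m, isnat (B i m)) -> isnat (T B k n).
Proof.
move=> hB.
pose F i j p q := B i p * (q%:R * (q%:R * B j q)) - p%:R * B i p * (q%:R * B j q).
have TE : T B k n = \sum_(i < k.+1) \sum_(p < n.+1) F i (k - i)%N p (n - p)%N.
  rewrite /T; apply: eq_bigr => i _; rewrite /smul -sumrB; apply: eq_bigr => p _.
  by rewrite /F /sdelta mulrA.
have Tint : T B k n \is a Num.int.
  rewrite TE; apply: rpred_sum => i _; apply: rpred_sum => p _; rewrite /F.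
  have hi : (i <= k)%N by rewrite -ltnS.
  have hj : (k - i <= k)%N by rewrite leq_subr.
  have hBi : forall i, (i <= k)%N -> forall m, B i m \is a Num.int.
    by move=> i' hi' m; apply: intr_nat; apply: hB.
  by rewrite rpredB ?rpredM ?natr_int ?hBi.
have T2 : T B k n + T B k n = \sum_(i < k.+1) \sum_(p < n.+1)
    B i p * B (k - i)%N (n - p)%N * ((n - p)%:R - p%:R) ^+ 2.
  rewrite {2}TE (rev_sum k (fun i j => \sum_(p < n.+1) F i j p (n - p)%N)) /=.
  rewrite (eq_bigr (fun i : 'I_k.+1 => \sum_(p < n.+1) F (k - i)%N i (n - p)%N p)); last first.
    by move=> i _; rewrite (rev_sum n (fun p q => F (k - i)%N i p q)).
  rewrite TE -big_split /=; apply: eq_bigr => i _; rewrite -big_split /=; apply: eq_bigr => p _.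
  rewrite /F; ring.
have T0 : 0 <= T B k n.
  rewrite -(pmulr_lge0 _ (ltr0n _ 2)) mulr_natr mulr2n T2.
  apply: sumr_ge0 => i _; apply: sumr_ge0 => p _; apply: mulr_ge0; last by apply: real_exprn_even_ge0 => //; apply: Rreal_int; rewrite rpredB ?natr_int.
  apply: mulr_ge0; apply: natr_ge0; apply: hB; by [rewrite -ltnS | rewrite leq_subr].
by rewrite /isnat natrEint Tint T0.
Qed.

Lemma S2_nat B k n : (forall i, (i <= k)%N -> forall m, isnat (B i m)) -> isnat (S2 B k n).
Proof.
move=> hB; rewrite /isnat /S2; apply: rpred_sum => i _; apply: rpred_sum => j _.
by apply: sz_nat => p; apply: smul_nat => q; apply: hB; rewrite -ltnS.
Qed.

Lemma S3_nat B k n : (forall i, (i <= k)%N -> forall m, isnat (B i m)) -> isnat (S3 B k n).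
Proof.
move=> hB; rewrite /isnat /S3; apply: rpred_sum => i _; apply: rpred_sum => j _; apply: rpred_sum => l _.
by apply: sz_nat => p; apply: smul_nat => q; [apply: smul_nat => r|]; apply: hB; rewrite -ltnS.
Qed.

Definition sc (s : algC) (f : series) : series := fun n => s * f n.

Lemma smul_sc s t f g : smul (sc s f) (sc t g) = sc (s * t) (smul f g).
Proof.
apply: funext => n; rewrite /sc /smul big_distrr; apply: eq_bigr => i _ /=; ring.
Qed.
Lemma sdelta_sc s f : sdelta (sc s f) = sc s (sdelta f).
Proof. apply: funext => n; rewrite /sc /sdelta; ring. Qed.
Lemma sz_sc s f : sz (sc s f) = sc s (sz f).
Proof. by apply: funext => -[|n]; rewrite /sc /= ?mulr0. Qed.

Lemma sgn_split k i : (i <= k)%N -> (-1) ^+ i * (-1) ^+ (k - i) = (-1) ^+ k :> algC.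
Proof. by move=> h; rewrite -exprD subnKC. Qed.

Lemma rhs_decomp B k n :
  (-1) ^+ k * rec_rhs (fun i => sc ((-1) ^+ i) (B i)) k n =
  sdelta (sdelta (B k)) n + T B k n + 3 * S2 B k n + S3 B k n.
Proof.
set s := (-1) ^+ k : algC.
have ss : s * s = 1 by rewrite /s -expr2 sqrr_sign.
have hT : \sum_(i < k.+1)
     (smul (sc ((-1) ^+ i) (B i)) (sdelta (sdelta (sc ((-1) ^+ (k - i)) (B (k - i)%N)))) n -
      smul (sdelta (sc ((-1) ^+ i) (B i))) (sdelta (sc ((-1) ^+ (k - i)) (B (k - i)%N))) n)
   = s * T B k n.
  rewrite /T big_distrr; apply: eq_bigr => i _ /=.
  rewrite !sdelta_sc !smul_sc /sc sgn_split -/s; last by rewrite -ltnS.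
  ring.
have h2 : \sum_(i < k.+1) \sum_(j < k.+1 | (i + j == k.+1)%N)
           sz (smul (sc ((-1) ^+ i) (B i)) (sc ((-1) ^+ j) (B j))) n = - s * S2 B k n.
  rewrite /S2 big_distrr; apply: eq_bigr => i _ /=.
  rewrite big_distrr; apply: eq_bigr => j /eqP hij /=.
  rewrite smul_sc sz_sc /sc -exprD hij exprS -/s; ring.
have h3 : \sum_(j1 < k.+1) \sum_(j2 < k.+1) \sum_(j3 < k.+1 | (j1 + j2 + j3 == k.+1)%N)
           sz (smul (smul (sc ((-1) ^+ j1) (B j1)) (sc ((-1) ^+ j2) (B j2))) (sc ((-1) ^+ j3) (B j3))) n
           = - s * S3 B k n.
  rewrite /S3 big_distrr; apply: eq_bigr => i _ /=.
  rewrite big_distrr; apply: eq_bigr => j _ /=.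
  rewrite big_distrr; apply: eq_bigr => l /eqP hij /=.
  rewrite !smul_sc sz_sc /sc -!exprD hij exprS -/s; ring.
rewrite /rec_rhs hT h2 h3 !sdelta_sc /sc -/s.
transitivity ((s * s) * (sdelta (sdelta (B k)) n + T B k n + 3 * S2 B k n + S3 B k n)).
  ring.
by rewrite ss mul1r.
Qed.

Definition Inv (f : series) := [/\ f 0%N = 0, forall n, isnat (f n),
   forall n, (1 <= n)%N -> 0 < f n & f 1%N = 1].

Lemma A0_inv (A0 : series) : A0 0%N = 0 ->
  sz (smul (sadd (sconst 1) A0) (smul (sadd (sconst 1) A0) (sadd (sconst 1) A0))) = A0 ->
  Inv A0.
Proof.
move=> a0 H.
set u := sadd (sconst 1) A0.
have HA n : A0 n.+1 = smul u (smul u u) n by rewrite -H.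
have u0 : u 0%N = 1 by rewrite /u /sadd /= a0 addr0.
have uS n : u n.+1 = A0 n.+1 by rewrite /u /sadd /= add0r.
have A1 : A0 1%N = 1 by rewrite HA !smul0 u0 !mulr1.
have main : forall n, isnat (A0 n) /\ ((1 <= n)%N -> 0 < A0 n).
  elim/ltn_ind => -[|n] IH.
    by rewrite a0; split => //; rewrite /isnat rpred0.
  have hu : forall p, (p <= n)%N -> isnat (u p).
    move=> [|p] hp; first by rewrite u0 /isnat rpred1.
    by rewrite uS; apply: (IH p.+1 _).1; rewrite ltnS.
  split.
    rewrite HA; apply: smul_natU => // p hp; apply: smul_natU => q hq; apply: hu; exact: leq_trans hq hp.
  move=> _; case: n IH hu => [|n] IH hu; first by rewrite A1 ltr01.
  have hu' : forall p, (p <= n.+1)%N -> 0 <= u p by move=> p hp; apply: natr_ge0; apply: hu.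
  have huu : forall p, (p <= n.+1)%N -> 0 <= smul u u p.
    move=> p hp; apply: natr_ge0; apply: smul_natU => q hq; apply: hu; exact: leq_trans hq hp.
  rewrite HA; apply: lt_le_trans (smul_ge u0 hu' huu).
  apply: lt_le_trans (smul_ge u0 hu' hu').
  by rewrite uS; apply: (IH n.+1 _).2.
split; [exact: a0 | | | exact: A1].
  by move=> n; exact: (main n).1.
by move=> n; exact: (main n).2.
Qed.

Lemma smul_scr f t g n : smul f (sc t g) n = t * smul f g n.
Proof. rewrite /smul /sc big_distrr; apply: eq_bigr => i _ /=; ring. Qed.

Lemma sdelta0 f : sdelta f 0%N = 0. Proof. by rewrite /sdelta mul0r. Qed.

Lemma TSS0 B k : [/\ T B k 0 = 0, S2 B k 0 = 0 & S3 B k 0 = 0].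
Proof.
split.
- by rewrite /T big1 // => i _; rewrite !smul0 !sdelta0 !mulr0 subrr.
- by rewrite /S2 big1 // => i _; rewrite big1.
- by rewrite /S3 big1 // => i _; rewrite big1 // => j _; rewrite big1.
Qed.

Lemma TSS1 B k : (forall i, (i <= k)%N -> B i 0%N = 0) ->
  [/\ T B k 1 = 0, S2 B k 1 = 0 & S3 B k 1 = 0].
Proof.
move=> hB.
have hB' : forall i : 'I_k.+1, B i 0%N = 0 by move=> i; apply: hB; rewrite -ltnS.
split.
- rewrite /T big1 // => i _; rewrite !smul1' !sdelta0 hB' !mulr0 !mul0r; ring.
- rewrite /S2 big1 // => i _; rewrite big1 // => j _ /=; by rewrite smul0 hB' mul0r.
- rewrite /S3 big1 // => i _; rewrite big1 // => j _; rewrite big1 // => l _ /=.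
  by rewrite smul0 hB' mulr0.
Qed.

Lemma pos5 (a b c d e : algC) : 0 <= a -> 0 < e -> 0 <= b -> 0 <= c -> 0 <= d ->
  0 < a + (e + b + c + d).
Proof.
move=> ha he hb hc hd; apply: ltr_wpDl => //; apply: ltr_wpDr => //.
apply: ltr_wpDr => //; exact: ltr_wpDr.
Qed.

Lemma step (A : nat -> series) k :
  A 0%N 0%N = 0 ->
  sz (smul (sadd (sconst 1) (A 0%N))
           (smul (sadd (sconst 1) (A 0%N)) (sadd (sconst 1) (A 0%N)))) = A 0%N ->
  (forall k : nat,
     smul (sadd (fun n => 2 * A 0%N n) (sconst (-1))) (A k.+1)
     = smul (sadd (sconst 1) (A 0%N)) (rec_rhs A k)) ->
  (forall i, (i <= k)%N -> Inv (sc ((-1) ^+ i) (A i))) ->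
  Inv (sc ((-1) ^+ k.+1) (A k.+1)).
Proof.
move=> a0 H0 H IH.
set Bf := fun i => sc ((-1) ^+ i) (A i).
change (Inv (Bf k.+1)).
have AB : (fun i => sc ((-1) ^+ i) (Bf i)) = A.
  by apply: funext => i; apply: funext => n; rewrite /Bf /sc signrMK.
set u := sadd (sconst 1) (A 0%N).
set cs := sz (smul u u).
have hB : forall i, (i <= k)%N -> forall m, isnat (Bf i m).
  by move=> i hi m; have [_ h _ _] := IH i hi; exact: h.
have hB0 : forall i, (i <= k)%N -> Bf i 0%N = 0.
  by move=> i hi; have [h _ _ _] := IH i hi.
have hA0 : forall p, isnat (A 0%N p).
  by move=> p; have := hB 0%N (leq0n _) p; rewrite /Bf /sc expr0 mul1r.
have hu : forall p, isnat (u p).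
  move=> p; rewrite /isnat /u /sadd rpredD //; first by case: p => [|p] /=; rewrite ?rpred1 ?rpred0.
  exact: hA0.
have cs0 : cs 0%N = 0 by [].
have csn : forall p, isnat (cs p) by move=> p; apply: sz_nat => q; exact: smul_nat.
have eqn : forall n, Bf k.+1 n = 3 * smul cs (Bf k.+1) n +
    (sdelta (sdelta (Bf k)) n + T Bf k n + 3 * S2 Bf k n + S3 Bf k n).
  move=> n.
  have e := key a0 H0 (H k) n.
  have dec := rhs_decomp Bf k n; rewrite AB in dec.
  rewrite -dec /Bf smul_scr /sc -/u -/cs.
  set s3 := smul cs (A k.+1) n in e *.
  set x := A k.+1 n in e *.
  set r := rec_rhs A k n in e *.
  have ex : x = s3 + s3 + s3 - r.
    transitivity (x + (s3 + s3 + s3 - x - r)); first by rewrite e addr0.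
    ring.
  rewrite ex exprS; ring.
have hn : forall n, isnat (Bf k.+1 n).
  elim/ltn_ind => n IHn; rewrite eqn /isnat.
  apply: rpredD; first by rewrite rpredM ?natr_nat //; exact: smul_nat_lt.
  apply: rpredD; last exact: S3_nat.
  apply: rpredD; last by rewrite rpredM ?natr_nat //; exact: S2_nat.
  apply: rpredD; last exact: T_nat.
  by apply: sdelta_nat => p; apply: sdelta_nat => q; apply: hB.
have z0 : Bf k.+1 0%N = 0.
  have [t0 s20 s30] := TSS0 Bf k.
  by rewrite eqn smul0 cs0 sdelta0 t0 s20 s30 !mul0r !mulr0 !addr0.
split => //.
- move=> n hn1; rewrite eqn; apply: pos5.
  + by apply: mulr_ge0; [exact: ler0n | apply: natr_ge0; exact: smul_nat].
  + rewrite /sdelta; apply: mulr_gt0; first by rewrite ltr0n.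
    apply: mulr_gt0; first by rewrite ltr0n.
    by have [_ _ h _] := IH k (leqnn k); apply: h.
  + by apply: natr_ge0; exact: T_nat.
  + by apply: mulr_ge0; [exact: ler0n | apply: natr_ge0; exact: S2_nat].
  + by apply: natr_ge0; exact: S3_nat.
- have [t1 s21 s31] := TSS1 hB0.
  rewrite eqn smul1' cs0 z0 t1 s21 s31 /sdelta.
  have h1k : Bf k 1%N = 1 by have [_ _ _ h] := IH k (leqnn k); exact: h.
  rewrite h1k.
  by rewrite !mul0r !mulr0 !addr0 !mul1r mulr0 add0r.
Qed.

Unset Implicit Arguments.

Theorem proposition3 (A : nat -> series) :
  (* A_0(0) = 0 and z (1 + A_0)^3 = A_0 *)
  A 0%N 0%N = 0 ->
  sz (smul (sadd (sconst 1) (A 0%N))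
           (smul (sadd (sconst 1) (A 0%N)) (sadd (sconst 1) (A 0%N)))) = A 0%N ->
  (* recurrence, multiplied through by the unit 2 A_0 - 1 *)
  (forall k : nat,
     smul (sadd (fun n => 2 * A 0%N n) (sconst (-1))) (A k.+1)
     = smul (sadd (sconst 1) (A 0%N)) (rec_rhs A k)) ->
  forall k : nat,
    A k 0%N = 0 /\
    (forall n : nat, (1 <= n)%N ->
       exists m : nat, (-1) ^+ k * A k n = m.+1%:R) /\
    (-1) ^+ k * A k 1%N = 1.
Proof.
move=> a0 H0 H.
have all : forall k, forall i, (i <= k)%N -> Inv (sc ((-1) ^+ i) (A i)).
  elim=> [|k IHk] i hi.
    rewrite leqn0 in hi; move/eqP: hi => ->.
    have -> : sc ((-1) ^+ 0) (A 0%N) = A 0%N by apply: funext => n; rewrite /sc expr0 mul1r.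
    exact: A0_inv.
  rewrite leq_eqVlt in hi; case/orP: hi => [/eqP -> | hi]; last exact: IHk.
  exact: step.
move=> k; have [h0 hn hp h1] := all k k (leqnn k).
split; last split.
- by move: h0; rewrite /sc => /eqP; rewrite mulf_eq0 signr_eq0 /= => /eqP.
- move=> n n1; have := hn n; rewrite /isnat => /natrP [[|m] hm].
    by have := hp n n1; rewrite hm ltxx.
  by exists m; rewrite -hm.
- exact: h1.
Qed.
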